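(* Let $\mathcal{M}$ be a metric space whose underlying set is $\omega$, and let $\mathcal{C}(\mathcal{M})$ be its metric completion. Suppose $\mathcal{C}(\mathcal{M})$ is a proper Polish metric space (every closed ball $\{y : d(x,y)\le r\}$ is compact). Then $\mathrm{SR}(\mathcal{C}(\mathcal{M})) \leq \omega_1^{\mathcal{M}} + 1$.
   Context: The language of metric spaces is $\mathscr{U} = \{\dot d_q, \dot d^q : q \in \mathbb{Q}^+\}$ with binary relation symbols, interpreted in a metric space by $\dot d_q(x,y) \Leftrightarrow d(x,y) < q$ and $\dot d^q(x,y) \Leftrightarrow d(x,y) > q$. For a structure $\mathcal{N}$ and tuples $\bar a=(a_0,\dots,a_{p-1})$, $\bar b=(b_0,\dots,b_{p-1})$ from $\mathcal{N}$ of equal length: $\bar a \sim_0 \bar b$ iff $a_i\mapsto b_i$ ($i<p$) is a partial $\mathscr{U}$-isomorphism; $\bar a \sim_{\alpha+1}\bar b$ iff for every $a\in\mathcal{N}$ there is $b\in\mathcal{N}$ with $\bar a a\sim_\alpha \bar b b$ and for every $b\in \mathcal{N}$ there is $a\in\mathcal{N}$ with $\bar a a\sim_\alpha\bar b b$; for limit $\beta$, $\bar a\sim_\beta\bar b$ iff $\bar a\sim_\alpha\bar b$ for all $\alpha<\beta$. $\mathrm{SR}(\bar a,\bar b)$ is the least ordinal $\mu$ with $\neg(\bar a\sim_\mu\bar b)$, or $\infty$ if none exists. $\mathrm{SR}(\bar a)=\sup\{\mathrm{SR}(\bar a,\bar b): \bar b\in {}^{|\bar a|}\mathcal{N},\ \mathrm{SR}(\bar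 a,\bar b)\neq\infty\}$ and $\mathrm{SR}(\mathcal{N})=\sup\{\mathrm{SR}(\bar a)+1:\bar a\in{}^{<\omega}\mathcal{N}\}$. The metric space $\mathcal{M}$ on $\omega$ is regarded as a real by coding the interpretations of all symbols of $\mathscr{U}$ in a fixed recursive way. For a real $x$, $\omega_1^x$ is the least ordinal $\alpha$ with $L_\alpha(x)\models\mathsf{KP}$ (equivalently, the least ordinal that is not the order type of a well-ordering of $\omega$ computable from $x$). *)

(* Defs.v *)
From Stdlib Require Import Reals QArith List Arith.
Open Scope R_scope.

Definition is_metric {X : Type} (d : X -> X -> R) : Prop :=
  (forall x y, 0 <= d x y) /\
  (forall x y, d x y = 0 <-> x = y) /\
  (forall x y, d x y = d y x) /\
  (forall x y z, d x z <= d x y + d y z).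

Definition cauchy {X : Type} (d : X -> X -> R) (u : nat -> X) : Prop :=
  forall e, 0 < e -> exists N, forall m n, (N <= m)%nat -> (N <= n)%nat -> d (u m) (u n) < e.

Definition converges_to {X : Type} (d : X -> X -> R) (u : nat -> X) (x : X) : Prop :=
  forall e, 0 < e -> exists N, forall n, (N <= n)%nat -> d (u n) x < e.

Definition complete_metric {X : Type} (d : X -> X -> R) : Prop :=
  forall u, cauchy d u -> exists x, converges_to d u x.

Definition metric_open {X : Type} (d : X -> X -> R) (U : X -> Prop) : Prop :=
  forall x, U x -> exists e, 0 < e /\ forall y, d x y < e -> U y.

Definition metric_compact {X : Type} (d : X -> X -> R) (K : X -> Prop) : Prop :=
  forall (I : Type) (U : I -> X -> Prop),
    (forall i, metric_open d (U i)) ->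
    (forall x, K x -> exists i, U i x) ->
    exists l : list I, forall x, K x -> exists i, In i l /\ U i x.

Definition closed_ball {X : Type} (d : X -> X -> R) (x : X) (r : R) : X -> Prop :=
  fun y => d x y <= r.

Definition proper_metric {X : Type} (d : X -> X -> R) : Prop :=
  forall x r, metric_compact d (closed_ball d x r).

Definition is_completion (d : nat -> nat -> R) {X : Type} (dX : X -> X -> R)
  (iota : nat -> X) : Prop :=
  is_metric dX /\ complete_metric dX /\
  (forall m n, dX (iota m) (iota n) = d m n) /\
  (forall x e, 0 < e -> exists n, dX x (iota n) < e).

Record WellOrder := {
  wo_car :> Type;
  wo_lt : wo_car -> wo_car -> Prop;
  wo_wf : well_founded wo_lt;
  wo_trans : forall x y z, wo_lt x y -> wo_lt y z -> wo_lt x z;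
  wo_total : forall x y, wo_lt x y \/ x = y \/ wo_lt y x }.
(* An element w : W stands for the ordinal = order type of {v | v < w}. *)

Definition wo_zero (W : WellOrder) (w : W) : Prop := forall v, ~ wo_lt W v w.
Definition wo_succ_of (W : WellOrder) (w v : W) : Prop :=
  wo_lt W v w /\ forall u, wo_lt W u w -> u = v \/ wo_lt W u v.
Definition wo_limit (W : WellOrder) (w : W) : Prop :=
  ~ wo_zero W w /\ forall v, ~ wo_succ_of W w v.

Definition partial_iso {X : Type} (dX : X -> X -> R) (a b : list X) : Prop :=
  length a = length b /\
  forall i j ai aj bi bj,
    nth_error a i = Some ai -> nth_error a j = Some aj ->
    nth_error b i = Some bi -> nth_error b j = Some bj ->
    (ai = aj <-> bi = bj) /\
    forall q : Q, (0 < q)%Q ->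
      (dX ai aj < Q2R q <-> dX bi bj < Q2R q) /\
      (dX ai aj > Q2R q <-> dX bi bj > Q2R q).

(* bf X dX W w a b  ==  a ~_w b  (w read as an ordinal), defined by the
   three clauses (zero / successor / limit); since W is well-founded
   this inductive definition is the transfinite recursion. *)
Inductive bf {X : Type} (dX : X -> X -> R) (W : WellOrder) : W -> list X -> list X -> Prop :=
| bf_zero w a b : wo_zero W w -> partial_iso dX a b -> bf dX W w a b
| bf_succ w v a b : wo_succ_of W w v ->
    (forall x, exists y, bf dX W v (a ++ x :: nil) (b ++ y :: nil)) ->
    (forall y, exists x, bf dX W v (a ++ x :: nil) (b ++ y :: nil)) ->
    bf dX W w a b
| bf_lim w a b : wo_limit W w -> (forall v, wo_lt W v w -> bf dX W v a b) -> bf dX W w a b.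

(* SR(a,b) <> infinity : some ordinal mu has not (a ~_mu b) *)
Definition SR_pair_finite {X : Type} (dX : X -> X -> R) (a b : list X) : Prop :=
  exists (W : WellOrder) (v : W), ~ bf dX W v a b.

(* SR(a,b) <= ord(w) : the least mu with not (a ~_mu b) is <= ord(w) *)
Definition SR_pair_le {X : Type} (dX : X -> X -> R) (a b : list X)
  (W : WellOrder) (w : W) : Prop :=
  exists v : W, (v = w \/ wo_lt W v w) /\ ~ bf dX W v a b.

(* SR(a) <= ord(w): sup over b of finite SR(a,b) *)
Definition SR_tuple_le {X : Type} (dX : X -> X -> R) (a : list X)
  (W : WellOrder) (w : W) : Prop :=
  forall b, length b = length a -> SR_pair_finite dX a b -> SR_pair_le dX a b W w.

(* SR(N) <= ord(w) : for every tuple a, SR(a) + 1 <= ord(w), i.e. SR(a) < ord(w) *)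
Definition SR_struct_le {X : Type} (dX : X -> X -> R) (W : WellOrder) (w : W) : Prop :=
  forall a : list X, exists u : W, wo_lt W u w /\ SR_tuple_le dX a W u.

Inductive prf : Type :=
| PZero | PSucc | PProj (i : nat) | POrac
| PComp (f : prf) (gs : list prf) | PRec (f g : prf) | PMu (f : prf).

Inductive eval (P : nat -> Prop) : prf -> list nat -> nat -> Prop :=
| ev_zero l : eval P PZero l 0
| ev_succ l : eval P PSucc l (S (nth 0 l 0%nat))
| ev_proj i l : eval P (PProj i) l (nth i l 0%nat)
| ev_orac1 l : P (nth 0 l 0%nat) -> eval P POrac l 1
| ev_orac0 l : ~ P (nth 0 l 0%nat) -> eval P POrac l 0
| ev_comp f gs l ys z : evalL P gs l ys -> eval P f ys z -> eval P (PComp f gs) l z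
| ev_rec0 f g l z : eval P f l z -> eval P (PRec f g) (0%nat :: l) z
| ev_recS f g m l y z : eval P (PRec f g) (m :: l) y -> eval P g (m :: y :: l) z ->
    eval P (PRec f g) (S m :: l) z
| ev_mu f l n : eval P f (n :: l) 0 ->
    (forall m, (m < n)%nat -> exists k, eval P f (m :: l) (S k)) -> eval P (PMu f) l n
with evalL (P : nat -> Prop) : list prf -> list nat -> list nat -> Prop :=
| evL_nil l : evalL P nil l nil
| evL_cons g gs l y ys : eval P g l y -> evalL P gs l ys -> evalL P (g :: gs) l (y :: ys).

Definition computable_rel_from (P : nat -> Prop) (R : nat -> nat -> Prop) : Prop :=
  exists e : prf, forall m n,
    (R m n -> eval P e (m :: n :: nil) 1) /\ (~ R m n -> eval P e (m :: n :: nil) 0).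

(* R is a (non-strict) well-ordering of its field {n | R n n} ⊆ nat *)
Definition is_wellordering_nat (R : nat -> nat -> Prop) : Prop :=
  (forall n m, R n m -> R n n /\ R m m) /\
  (forall n m, R n m -> R m n -> n = m) /\
  (forall n m k, R n m -> R m k -> R n k) /\
  (forall n m, R n n -> R m m -> R n m \/ R m n) /\
  well_founded (fun n m => R n m /\ n <> m).

Definition ordtype_eq (R : nat -> nat -> Prop) (W : WellOrder) (w : W) : Prop :=
  exists f : nat -> W,
    (forall n, R n n -> wo_lt W (f n) w) /\
    (forall v, wo_lt W v w -> exists n, R n n /\ f n = v) /\
    (forall n m, R n n -> R m m -> ((R n m /\ n <> m) <-> wo_lt W (f n) (f m))).

Definition realized_from (P : nat -> Prop) (W : WellOrder) (w : W) : Prop :=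
  exists R, computable_rel_from P R /\ is_wellordering_nat R /\ ordtype_eq R W w.

Definition is_omega1CK (P : nat -> Prop) (W : WellOrder) (w : W) : Prop :=
  ~ realized_from P W w /\ forall v, wo_lt W v w -> realized_from P W v.

Definition cpair (a b : nat) : nat := ((a + b) * (a + b + 1)) / 2 + b.

Definition posrat (a b : nat) : R := INR (S a) / INR (S b).

Definition code_metric (d : nat -> nat -> R) : nat -> Prop :=
  fun c => exists i a b m n,
    c = cpair i (cpair a (cpair b (cpair m n))) /\
    ((i = 0%nat /\ d m n < posrat a b) \/ (i = 1%nat /\ d m n > posrat a b)).

(* Main.v *)
Require Import Defs.
From Stdlib Require Import Reals QArith Qreals List Arith Lia Lra Classical IndefiniteDescription.
Open Scope R_scope.

Lemma wo_irrefl (W : WellOrder) (x : W) : ~ wo_lt W x x.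
Proof. intro H. induction (wo_wf W x) as [x _ IH]. exact (IH x H H). Qed.

Lemma wo_min (W : WellOrder) (P : W -> Prop) (x : W) :
  P x -> exists m, P m /\ forall u, P u -> m = u \/ wo_lt W m u.
Proof.
  induction (wo_wf W x) as [x _ IH]. intro Px.
  destruct (classic (exists u, wo_lt W u x /\ P u)) as [[u [Hu Pu]]|N].
  - exact (IH u Hu Pu).
  - exists x; split; auto. intros u Pu.
    destruct (wo_total W x u) as [H|[H|H]]; auto. exfalso; apply N; eauto.
Qed.

Inductive fin (W : WellOrder) : W -> nat -> Prop :=
| fin0 v : wo_zero W v -> fin W v 0
| finS v u n : wo_succ_of W v u -> fin W u n -> fin W v (S n).

Definition ppred := PRec PZero (PProj 0).
Definition psub := PRec (PProj 0) (PComp ppred (PProj 1 :: nil)).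

Lemma eval_pred P x : eval P ppred (x::nil) (Nat.pred x).
Proof.
  induction x.
  - apply ev_rec0. constructor.
  - eapply ev_recS. + apply IHx. + exact (ev_proj P 0 (x::Nat.pred x::nil)).
Qed.

Lemma eval_sub P y x : eval P psub (y::x::nil) (x - y)%nat.
Proof.
  induction y.
  - rewrite Nat.sub_0_r. apply ev_rec0. exact (ev_proj P 0 (x::nil)).
  - eapply ev_recS. + apply IHy.
    + eapply ev_comp. * apply evL_cons. -- exact (ev_proj P 1 (y :: (x - y)%nat :: x :: nil)).
      -- apply evL_nil.
      * rewrite Nat.sub_succ_r. apply eval_pred.
Qed.

Fixpoint pcst (c : nat) : prf :=
  match c with O => PZero | S c => PComp PSucc (pcst c :: nil) end.

Lemma eval_cst P c l : eval P (pcst c) l c.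
Proof.
  induction c; simpl.
  - constructor.
  - eapply ev_comp. + apply evL_cons. apply IHc. apply evL_nil.
    + exact (ev_succ P (c::nil)).
Qed.

Definition prog (k : nat) : prf :=
  PComp psub (PComp psub (pcst k :: PComp PSucc (PProj 1 :: nil) :: nil)
    :: PComp psub (PComp psub (PProj 1 :: PProj 0 :: nil) :: pcst 1 :: nil) :: nil).

Lemma eval_prog P k m n :
  eval P (prog k) (m::n::nil) ((1 - (m - n)) - (S n - k))%nat.
Proof.
  unfold prog. eapply ev_comp.
  - apply evL_cons.
    + eapply ev_comp.
      * apply evL_cons. apply eval_cst. apply evL_cons.
        eapply ev_comp. apply evL_cons. exact (ev_proj P 1 (m::n::nil)). apply evL_nil.
        exact (ev_succ P (n::nil)). apply evL_nil.
      * apply eval_sub.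
    + apply evL_cons.
      * eapply ev_comp. -- apply evL_cons.
        eapply ev_comp. apply evL_cons. exact (ev_proj P 1 (m::n::nil)).
        apply evL_cons. exact (ev_proj P 0 (m::n::nil)). apply evL_nil.
        apply eval_sub. apply evL_cons. apply eval_cst. apply evL_nil.
        -- apply eval_sub.
      * apply evL_nil.
  - apply eval_sub.
Qed.

Lemma fin_enum (W : WellOrder) v k : fin W v k ->
  exists f : nat -> W,
    (forall n, (n < k)%nat -> wo_lt W (f n) v) /\
    (forall u, wo_lt W u v -> exists n, (n < k)%nat /\ f n = u) /\
    (forall n m, (n < k)%nat -> (m < k)%nat -> ((n < m)%nat <-> wo_lt W (f n) (f m))).
Proof.
  induction 1 as [v Hz|v u n [Huv Hmax] Hfin IH].
  - exists (fun _ => v). repeat split; intros; try lia. exfalso; eapply Hz; eauto.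
  - destruct IH as [f [H1 [H2 H3]]].
    exists (fun i => if Nat.eqb i n then u else f i). split; [|split].
    + intros i Hi. destruct (Nat.eqb_spec i n). auto.
      apply (wo_trans W _ u); auto. apply H1; lia.
    + intros t Ht. destruct (Hmax t Ht) as [->|Htu].
      * exists n. rewrite Nat.eqb_refl. split; auto; lia.
      * destruct (H2 t Htu) as [i [Hi Hfi]]. exists i. split. lia.
        destruct (Nat.eqb_spec i n). lia. auto.
    + intros i j Hi Hj. split; intro Hij.
      { destruct (Nat.eqb_spec i n); destruct (Nat.eqb_spec j n); try lia.
      apply H1; lia. apply (H3 i j); lia. }
      destruct (Nat.eqb_spec i n); destruct (Nat.eqb_spec j n).
      * subst. exfalso; eapply wo_irrefl; eauto.
      * exfalso. assert (Hj' : (j < n)%nat) by lia. pose proof (H1 j Hj').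
        eapply wo_irrefl. eapply wo_trans; eauto.
      * lia.
      * apply (proj2 (H3 i j ltac:(lia) ltac:(lia))); exact Hij.
Qed.

Lemma fin_realized (P : nat -> Prop) (W : WellOrder) v k : fin W v k -> realized_from P W v.
Proof.
  intro Hf. destruct (fin_enum W v k Hf) as [f [H1 [H2 H3]]].
  exists (fun a b => (a <= b)%nat /\ (b < k)%nat). split; [|split].
  - exists (prog k). intros m n. split.
    + intros [Hmn Hn]. assert (E : ((1 - (m - n)) - (S n - k))%nat = 1%nat) by lia.
      rewrite <- E. apply eval_prog.
    + intros Hno. assert (E : ((1 - (m - n)) - (S n - k))%nat = 0%nat).
      2:{ rewrite <- E. apply eval_prog. }
      destruct (Nat.le_gt_cases m n); destruct (Nat.le_gt_cases k n); try lia.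
  - split; [|split; [|split; [|split]]].
    + intros n m [? ?]; split; split; lia.
    + intros n m [? ?] [? ?]; lia.
    + intros n m k' [? ?] [? ?]; split; lia.
    + intros n m [? ?] [? ?]. lia.
    + apply (well_founded_lt_compat nat (fun x => x)). intros x y [[? ?] ?]. lia.
  - exists f. split; [|split].
    + intros n [_ Hn]. auto.
    + intros u Hu. destruct (H2 u Hu) as [n [Hn Hfn]]. exists n. split; [split; lia | auto].
    + intros n m [_ Hn] [_ Hm]. split.
      * intros [Hnm Hne]. apply (proj1 (H3 n m Hn Hm)). lia.
      * intros Hl. apply (H3 n m Hn Hm) in Hl. split; lia.
Qed.

Lemma chain (P : nat -> Prop) (W : WellOrder) (w : W) :
  is_omega1CK P W w -> forall n, exists v, wo_lt W v w /\ fin W v n.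
Proof.
  intros [Hnr _]. induction n as [|n [v [Hvw Hfv]]].
  - destruct (wo_min W (fun _ => True) w I) as [m [_ Hm]].
    assert (Hz : wo_zero W m).
    { intros t Ht. destruct (Hm t I) as [->|Hmt]. eapply wo_irrefl; eauto.
      eapply wo_irrefl. eapply wo_trans; eauto. }
    destruct (Hm w I) as [->|Hmw].
    + exfalso. apply Hnr. apply (fin_realized P W w 0). constructor; auto.
    + exists m. split; auto. constructor; auto.
  - destruct (wo_min W (fun u => wo_lt W v u) w Hvw) as [s [Hvs Hs]].
    assert (Hsucc : wo_succ_of W s v).
    { split; auto. intros t Ht. destruct (wo_total W t v) as [H|[H|H]]; auto.
      exfalso. destruct (Hs t H) as [->|Hst]. eapply wo_irrefl; eauto.
      eapply wo_irrefl. eapply wo_trans; eauto. }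
    destruct (Hs w Hvw) as [->|Hsw].
    + exfalso. apply Hnr. apply (fin_realized P W w (S n)). econstructor; eauto.
    + exists s. split; auto. econstructor; eauto.
Qed.

Lemma Qdense (r1 r2 : R) : 0 <= r1 -> r1 < r2 ->
  exists q : Q, (0 < q)%Q /\ r1 < Q2R q < r2.
Proof.
  intros H0 H12.
  destruct (archimed (/ (r2 - r1))) as [HN1 HN2].
  set (N := up (/ (r2 - r1))) in *.
  assert (HNpos : 0 < IZR N).
  { apply Rlt_trans with (/ (r2 - r1)); auto. apply Rinv_0_lt_compat. lra. }
  assert (HNz : (0 < N)%Z) by (apply lt_IZR; exact HNpos).
  destruct (archimed (r1 * IZR N)) as [HM1 HM2].
  set (M := up (r1 * IZR N)) in *.
  destruct N as [|p|p]; try lia.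
  exists (Qmake M p).
  assert (HQ : Q2R (Qmake M p) = IZR M / IZR (Z.pos p)) by reflexivity.
  assert (Hlt1 : r1 < IZR M / IZR (Z.pos p)).
  { apply Rmult_lt_reg_r with (IZR (Z.pos p)); auto.
    unfold Rdiv. rewrite Rmult_assoc, Rinv_l by lra. lra. }
  assert (Hlt2 : IZR M / IZR (Z.pos p) < r2).
  { assert (Hinv : / IZR (Z.pos p) < r2 - r1).
    { rewrite <- (Rinv_inv (r2 - r1)). apply Rinv_lt_contravar; auto.
      apply Rmult_lt_0_compat; auto. apply Rinv_0_lt_compat; lra. }
    assert (IZR M / IZR (Z.pos p) <= r1 + / IZR (Z.pos p)).
    { apply Rmult_le_reg_r with (IZR (Z.pos p)); auto.
      unfold Rdiv. rewrite Rmult_assoc, Rinv_l by lra. rewrite Rmult_plus_distr_r, Rinv_l by lra. lra. }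
    lra. }
  split; [|rewrite HQ; lra].
  apply Rlt_Qlt. rewrite HQ. unfold Q2R at 1. simpl. lra.
Qed.

Definition dist_eq {X : Type} (dX : X -> X -> R) (a b : list X) : Prop :=
  length a = length b /\
  forall i j ai aj bi bj,
    nth_error a i = Some ai -> nth_error a j = Some aj ->
    nth_error b i = Some bi -> nth_error b j = Some bj ->
    dX ai aj = dX bi bj.

Lemma pi_de {X : Type} (dX : X -> X -> R) (Hm : is_metric dX) a b :
  partial_iso dX a b -> dist_eq dX a b.
Proof.
  intros [Hl H]. split; auto. intros i j ai aj bi bj H1 H2 H3 H4.
  destruct (H i j ai aj bi bj H1 H2 H3 H4) as [_ Hq].
  destruct Hm as [Hpos _].
  destruct (Rtotal_order (dX ai aj) (dX bi bj)) as [Hlt|[Heq|Hgt]]; auto; exfalso.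
  - destruct (Qdense _ _ (Hpos ai aj) Hlt) as [q [Hq0 [Hq1 Hq2]]].
    destruct (Hq q Hq0) as [Hiff _]. apply Hiff in Hq1. lra.
  - destruct (Qdense _ _ (Hpos bi bj) Hgt) as [q [Hq0 [Hq1 Hq2]]].
    destruct (Hq q Hq0) as [Hiff _]. apply Hiff in Hq1. lra.
Qed.

Lemma de_pi {X : Type} (dX : X -> X -> R) (Hm : is_metric dX) a b :
  dist_eq dX a b -> partial_iso dX a b.
Proof.
  intros [Hl H]. split; auto. intros i j ai aj bi bj H1 H2 H3 H4.
  pose proof (H i j ai aj bi bj H1 H2 H3 H4) as E.
  destruct Hm as [_ [Hz _]]. split.
  - rewrite <- (Hz ai aj), <- (Hz bi bj), E. tauto.
  - intros q _. rewrite E. tauto.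
Qed.

Fixpoint sim {X : Type} (dX : X -> X -> R) (n : nat) (a b : list X) : Prop :=
  match n with
  | O => dist_eq dX a b
  | S n => (forall x, exists y, sim dX n (a ++ x :: nil) (b ++ y :: nil)) /\
           (forall y, exists x, sim dX n (a ++ x :: nil) (b ++ y :: nil))
  end.

Lemma nth_app1 {X : Type} (a : list X) x i u :
  nth_error a i = Some u -> nth_error (a ++ x :: nil) i = Some u.
Proof.
  intro H. rewrite nth_error_app1; auto. apply nth_error_Some. congruence.
Qed.

Lemma nth_app_last {X : Type} (a : list X) x : nth_error (a ++ x :: nil) (length a) = Some x.
Proof. rewrite nth_error_app2 by lia. rewrite Nat.sub_diag. reflexivity. Qed.

Lemma de_prefix {X : Type} (dX : X -> X -> R) a b x y :
  dist_eq dX (a ++ x :: nil) (b ++ y :: nil) -> dist_eq dX a b.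
Proof.
  intros [Hl H]. rewrite !length_app in Hl. simpl in Hl. split; [lia|].
  intros i j ai aj bi bj H1 H2 H3 H4. apply (H i j); apply nth_app1; auto.
Qed.

Lemma sim_de {X : Type} (dX : X -> X -> R) (x0 : X) n : forall a b,
  sim dX n a b -> dist_eq dX a b.
Proof.
  induction n; simpl; auto. intros a b [H1 _]. destruct (H1 x0) as [y Hy].
  apply de_prefix with x0 y. apply IHn; auto.
Qed.

Lemma sim_sym {X : Type} (dX : X -> X -> R) (Hm : is_metric dX) n : forall a b,
  sim dX n a b -> sim dX n b a.
Proof.
  induction n; simpl.
  - intros a b [Hl H]. split; auto. intros i j ai aj bi bj H1 H2 H3 H4. symmetry. eauto.
  - intros a b [H1 H2]. split.
    + intros x. destruct (H2 x) as [y Hy]. exists y. auto.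
    + intros y. destruct (H1 y) as [x Hx]. exists x. auto.
Qed.

Lemma sim_mono {X : Type} (dX : X -> X -> R) (x0 : X) n : forall a b,
  sim dX (S n) a b -> sim dX n a b.
Proof.
  induction n.
  - intros a b H. exact (sim_de dX x0 1 a b H).
  - intros a b [H1 H2]. split.
    + intros x. destruct (H1 x) as [y Hy]. exists y. auto.
    + intros y. destruct (H2 y) as [x Hx]. exists x. auto.
Qed.

Lemma sim_le {X : Type} (dX : X -> X -> R) (x0 : X) m k a b :
  (m <= k)%nat -> sim dX k a b -> sim dX m a b.
Proof.
  induction 1; auto. intro H'. apply IHle. apply sim_mono; auto.
Qed.

Definition close {X : Type} (dX : X -> X -> R) (e : R) (a a' : list X) : Prop :=
  length a = length a' /\
  forall i u v, nth_error a i = Some u -> nth_error a' i = Some v -> dX u v < e.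

Lemma close_app {X : Type} (dX : X -> X -> R) e a a' u v :
  close dX e a a' -> dX u v < e -> close dX e (a ++ u :: nil) (a' ++ v :: nil).
Proof.
  intros [Hl H] Huv. split. rewrite !length_app; simpl; lia.
  intros i p q Hp Hq.
  destruct (Nat.lt_ge_cases i (length a)).
  - rewrite nth_error_app1 in Hp by lia. rewrite nth_error_app1 in Hq by lia. eauto.
  - rewrite nth_error_app2 in Hp by lia. rewrite nth_error_app2 in Hq by lia.
    rewrite <- Hl in Hq. destruct (i - length a)%nat as [|n].
    + simpl in *. inversion Hp; inversion Hq; subst; auto.
    + destruct n; simpl in Hp; discriminate.
Qed.

Lemma close_refl {X : Type} (dX : X -> X -> R) (Hm : is_metric dX) e a :
  0 < e -> close dX e a a.
Proof.
  intros He. split; auto. intros i u v Hu Hv. rewrite Hu in Hv. inversion Hv; subst.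
  destruct Hm as [_ [Hz _]]. rewrite (proj2 (Hz v v) eq_refl). auto.
Qed.

Lemma close_sym {X : Type} (dX : X -> X -> R) (Hm : is_metric dX) e a a' :
  close dX e a a' -> close dX e a' a.
Proof.
  intros [Hl H]. split; auto. intros i u v Hu Hv. destruct Hm as [_ [_ [Hs _]]].
  rewrite Hs. eauto.
Qed.

Lemma close_mono {X : Type} (dX : X -> X -> R) e e' a a' :
  e <= e' -> close dX e a a' -> close dX e' a a'.
Proof.
  intros Hee [Hl H]. split; auto. intros i u v Hu Hv. specialize (H i u v Hu Hv). lra.
Qed.

Lemma nth_some {X : Type} (l : list X) i : (i < length l)%nat -> exists v, nth_error l i = Some v.
Proof.
  intro H. destruct (nth_error l i) eqn:E. eauto. apply nth_error_Some in H. congruence.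
Qed.

Lemma nth_lt {X : Type} (l : list X) i v : nth_error l i = Some v -> (i < length l)%nat.
Proof. intro H. apply nth_error_Some. congruence. Qed.

Lemma dist_move {X : Type} (dX : X -> X -> R) (Hm : is_metric dX) u v u' v' :
  dX u v <= dX u u' + dX u' v' + dX v' v.
Proof.
  destruct Hm as [_ [_ [_ Ht]]].
  pose proof (Ht u u' v). pose proof (Ht u' v' v). lra.
Qed.

Lemma le_eps (r s : R) : (forall e, 0 < e -> r < s + e) -> r <= s.
Proof.
  intros H. apply Rnot_lt_le. intro Hlt. specialize (H (r - s) ltac:(lra)). lra.
Qed.

Lemma cluster {X : Type} (dX : X -> X -> R) (Hm : is_metric dX) (K : X -> Prop)
  (HK : metric_compact dX K) (y : nat -> X) (Hy : forall k, K (y k)) :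
  exists z, forall e, 0 < e -> forall N, exists k, (N <= k)%nat /\ dX (y k) z < e.
Proof.
  apply NNPP. intro Hno.
  set (U := fun (i : X * R * nat) (p : X) =>
    (forall k, (snd i <= k)%nat -> snd (fst i) <= dX (y k) (fst (fst i))) /\
    dX (fst (fst i)) p < snd (fst i)).
  destruct Hm as [Hpos [Hz [Hs Ht]]].
  destruct (HK _ U) as [l Hl].
  - intros [[z e] N] p [Hc Hp]. simpl in *. exists (e - dX z p). split. lra.
    intros q Hq. split; auto. simpl. pose proof (Ht z p q). lra.
  - intros p Kp.
    destruct (classic (exists e N, 0 < e /\ forall k, (N <= k)%nat -> e <= dX (y k) p))
      as [[e [N [He Hk]]]|Hn].
    + exists (p, e, N). split; auto. simpl. rewrite (proj2 (Hz p p) eq_refl). auto.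
    + exfalso. apply Hno. exists p. intros e He N. apply NNPP. intro Hk.
      apply Hn. exists e, N. split; auto. intros k Hk'. apply Rnot_lt_le. intro Hlt.
      apply Hk. exists k. auto.
  - set (M := fold_right (fun i acc => Nat.max (snd i) acc) 0%nat l).
    assert (HM : forall i, In i l -> (snd i <= M)%nat).
    { unfold M. clear. induction l as [|j l IH]; simpl; [tauto|].
      intros i [->|Hi]. lia. specialize (IH i Hi). lia. }
    destruct (Hl (y M) (Hy M)) as [[[z e] N] [Hin [Hc Hp]]]. simpl in *.
    specialize (Hc M (HM _ Hin)). simpl in Hc. rewrite Hs in Hp. lra.
Qed.

Lemma inv_S_le1 k : / INR (S k) <= 1.
Proof.
  rewrite <- Rinv_1. apply Rinv_le_contravar. lra. rewrite S_INR. pose proof (pos_INR k). lra.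
Qed.

Lemma inv_S_pos k : 0 < / INR (S k).
Proof. apply Rinv_0_lt_compat. apply lt_0_INR. lia. Qed.

Lemma sim_closed {X : Type} (dX : X -> X -> R) (Hm : is_metric dX) (x0 : X)
  (Hprop : proper_metric dX) m : forall a b, a <> nil ->
  (forall e, 0 < e -> exists a' b', close dX e a a' /\ close dX e b b' /\ sim dX m a' b') ->
  sim dX m a b.
Proof.
  pose proof Hm as [Hpos [Hz [Hs Ht]]].
  induction m as [|m IHm]; intros a b Hne H.
  - simpl. destruct (H 1 ltac:(lra)) as [a' [b' [[La _] [[Lb _] [Ld _]]]]].
    split; [congruence|].
    intros i j ai aj bi bj H1 H2 H3 H4.
    assert (Key : forall e, 0 < e -> dX ai aj < dX bi bj + e /\ dX bi bj < dX ai aj + e).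
    { intros e He. destruct (H (e/4) ltac:(lra)) as [a'' [b'' [[La' Ca] [[Lb' Cb] [Ld' Dd]]]]].
      destruct (nth_some a'' i) as [a'i Ha'i]. rewrite <- La'. eapply nth_lt; eauto.
      destruct (nth_some a'' j) as [a'j Ha'j]. rewrite <- La'. eapply nth_lt; eauto.
      destruct (nth_some b'' i) as [b'i Hb'i]. rewrite <- Lb'. eapply nth_lt; eauto.
      destruct (nth_some b'' j) as [b'j Hb'j]. rewrite <- Lb'. eapply nth_lt; eauto.
      pose proof (Dd i j a'i a'j b'i b'j Ha'i Ha'j Hb'i Hb'j).
      pose proof (Ca i ai a'i H1 Ha'i). pose proof (Ca j aj a'j H2 Ha'j).
      pose proof (Cb i bi b'i H3 Hb'i). pose proof (Cb j bj b'j H4 Hb'j).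
      pose proof (dist_move dX Hm ai aj a'i a'j).
      pose proof (dist_move dX Hm a'i a'j ai aj).
      pose proof (dist_move dX Hm bi bj b'i b'j).
      pose proof (dist_move dX Hm b'i b'j bi bj).
      rewrite (Hs a'i ai), (Hs aj a'j) in *. rewrite (Hs b'i bi), (Hs bj b'j) in *.
      split; lra. }
    apply Rle_antisym; apply le_eps; intros e He; apply Key; auto.
  - assert (fwd : forall a b, a <> nil ->
      (forall e, 0 < e -> exists a' b', close dX e a a' /\ close dX e b b' /\ sim dX (S m) a' b') ->
      forall x, exists y, sim dX m (a ++ x :: nil) (b ++ y :: nil)).
    { clear a b Hne H. intros a b Hne H x.
      destruct (H 1 ltac:(lra)) as [a1 [b1 [[La1 _] [[Lb1 _] Hs1]]]].
      pose proof (sim_de dX x0 _ _ _ Hs1) as [Ld1 _].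
      assert (Hla : (0 < length a)%nat) by (destruct a; [congruence|simpl; lia]).
      destruct (nth_some a 0 Hla) as [a0 Ha0].
      destruct (nth_some b 0 ltac:(lia)) as [b0 Hb0].
      assert (Hex : forall k, exists yk a' b', close dX (/ INR (S k)) a a' /\
                 close dX (/ INR (S k)) b b' /\ sim dX m (a' ++ x :: nil) (b' ++ yk :: nil)).
      { intro k. destruct (H _ (inv_S_pos k)) as [a' [b' [Ca [Cb [Hf _]]]]].
        destruct (Hf x) as [y Hy]. exists y, a', b'. auto. }
      set (yf := fun k => proj1_sig (constructive_indefinite_description _ (Hex k))).
      assert (Hyf : forall k, exists a' b', close dX (/ INR (S k)) a a' /\
                 close dX (/ INR (S k)) b b' /\ sim dX m (a' ++ x :: nil) (b' ++ yf k :: nil)).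
      { intro k. exact (proj2_sig (constructive_indefinite_description _ (Hex k))). }
      assert (Hball : forall k, closed_ball dX b0 (dX a0 x + 2) (yf k)).
      { intro k. unfold closed_ball.
        destruct (Hyf k) as [a' [b' [[La Ca] [[Lb Cb] Hsk]]]].
        destruct (sim_de dX x0 _ _ _ Hsk) as [Lk De].
        rewrite !length_app in Lk. simpl in Lk.
        destruct (nth_some a' 0 ltac:(lia)) as [a'0 Ha'0].
        destruct (nth_some b' 0 ltac:(lia)) as [b'0 Hb'0].
        assert (E : dX a'0 x = dX b'0 (yf k)).
        { apply (De 0%nat (length a') a'0 x b'0 (yf k)).
          - apply nth_app1; auto.
          - apply nth_app_last.
          - apply nth_app1; auto.
          - replace (length a') with (length b') by lia. apply nth_app_last. }
        pose proof (Ca 0%nat a0 a'0 Ha0 Ha'0). pose proof (Cb 0%nat b0 b'0 Hb0 Hb'0).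
        pose proof (inv_S_le1 k).
        pose proof (Ht b0 b'0 (yf k)). pose proof (Ht a'0 a0 x). rewrite (Hs a'0 a0) in *.
        lra. }
      destruct (cluster dX Hm _ (Hprop b0 (dX a0 x + 2)) yf Hball) as [z Hzc].
      exists z. apply IHm.
      { intro E. destruct a; simpl in E; discriminate. }
      intros e He.
      destruct (archimed_cor1 (e/2) ltac:(lra)) as [N [HN HN0]].
      destruct (Hzc (e/2) ltac:(lra) N) as [k [Hk Hd]].
      destruct (Hyf k) as [a' [b' [Ca [Cb Hsk]]]].
      assert (Hek : / INR (S k) <= e).
      { assert (/ INR (S k) <= / INR N).
        { apply Rinv_le_contravar. apply lt_0_INR; lia. apply le_INR; lia. }
        lra. }
      exists (a' ++ x :: nil), (b' ++ yf k :: nil). split; [|split]; auto.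
      - apply close_app. eapply close_mono; eauto. rewrite (proj2 (Hz x x) eq_refl). auto.
      - apply close_app. eapply close_mono; eauto. rewrite Hs. lra. }
    split.
    + apply fwd; auto.
    + intros y.
      destruct (H 1 ltac:(lra)) as [a1 [b1 [[La1 _] [[Lb1 _] Hs1]]]].
      pose proof (sim_de dX x0 _ _ _ Hs1) as [Ld1 _].
      assert (Hbne : b <> nil).
      { intro E. subst b. simpl in Lb1. destruct a; [congruence|]. simpl in La1. lia. }
      destruct (fwd b a Hbne) with (x := y) as [x Hx].
      * intros e He. destruct (H e He) as [a' [b' [Ca [Cb Hsm]]]].
        exists b', a'. split; auto. split; auto. apply sim_sym; auto.
      * exists x. apply sim_sym; auto.
Qed.

Lemma sim_ext {X : Type} (dX : X -> X -> R) (Hm : is_metric dX) (x0 : X)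
  (Hprop : proper_metric dX) a b : a <> nil -> (forall n, sim dX n a b) ->
  forall x, exists y, forall n, sim dX n (a ++ x :: nil) (b ++ y :: nil).
Proof.
  pose proof Hm as [Hpos [Hz [Hs Ht]]].
  intros Hne Hall x.
  assert (Hex : forall n, exists y, sim dX n (a ++ x :: nil) (b ++ y :: nil)).
  { intro n. exact (proj1 (Hall (S n)) x). }
  set (yf := fun n => proj1_sig (constructive_indefinite_description _ (Hex n))).
  assert (Hyf : forall n, sim dX n (a ++ x :: nil) (b ++ yf n :: nil)).
  { intro n. exact (proj2_sig (constructive_indefinite_description _ (Hex n))). }
  assert (Hla : (0 < length a)%nat) by (destruct a; [congruence|simpl; lia]).
  destruct (nth_some a 0 Hla) as [a0 Ha0].
  pose proof (sim_de dX x0 _ _ _ (Hall 0%nat)) as [Lab _].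
  destruct (nth_some b 0 ltac:(lia)) as [b0 Hb0].
  assert (Hball : forall k, closed_ball dX b0 (dX a0 x) (yf k)).
  { intro k. unfold closed_ball. destruct (sim_de dX x0 _ _ _ (Hyf k)) as [_ De].
    rewrite <- (De 0%nat (length a) a0 x b0 (yf k)).
    - lra.
    - apply nth_app1; auto.
    - apply nth_app_last.
    - apply nth_app1; auto.
    - rewrite Lab. apply nth_app_last. }
  destruct (cluster dX Hm _ (Hprop b0 (dX a0 x)) yf Hball) as [z Hzc].
  exists z. intro n. apply (sim_closed dX Hm x0 Hprop).
  { intro E. destruct a; simpl in E; discriminate. }
  intros e He. destruct (Hzc e He n) as [k [Hk Hd]].
  exists (a ++ x :: nil), (b ++ yf k :: nil). split; [|split].
  - apply close_refl; auto.
  - apply close_app. apply close_refl; auto. rewrite Hs; auto.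
  - apply (sim_le dX x0 n k); auto.
Qed.

Lemma bf_all {X : Type} (dX : X -> X -> R) (Hm : is_metric dX) (x0 : X)
  (Hprop : proper_metric dX) (W : WellOrder) (v : W) : forall a b, a <> nil ->
  (forall n, sim dX n a b) -> bf dX W v a b.
Proof.
  induction (wo_wf W v) as [v _ IH]. intros a b Hne Hall.
  destruct (classic (wo_zero W v)) as [Hz|Hnz].
  - apply bf_zero; auto. apply de_pi; auto. exact (Hall 0%nat).
  - destruct (classic (exists u, wo_succ_of W v u)) as [[u Hu]|Hns].
    + apply (bf_succ dX W v u); auto.
      * intros x. destruct (sim_ext dX Hm x0 Hprop a b Hne Hall x) as [y Hy].
        exists y. apply IH; auto. apply Hu. intro E. destruct a; simpl in E; discriminate.
      * intros y.
        pose proof (sim_de dX x0 _ _ _ (Hall 0%nat)) as [Lab _].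
        assert (Hbne : b <> nil).
        { intro E. subst b. destruct a; [congruence|]. simpl in Lab. discriminate. }
        destruct (sim_ext dX Hm x0 Hprop b a Hbne (fun n => sim_sym dX Hm n a b (Hall n)) y)
          as [x Hx].
        exists x. apply IH; auto. apply Hu. intro E. destruct a; simpl in E; discriminate.
        intro n. apply sim_sym; auto.
    + apply bf_lim. * split; auto. intros u Hu. apply Hns. eauto.
      * intros u Hu. apply IH; auto.
Qed.

Lemma bf_refl {X : Type} (dX : X -> X -> R) (W : WellOrder) (v : W) : forall a, bf dX W v a a.
Proof.
  induction (wo_wf W v) as [v _ IH]. intros a.
  destruct (classic (wo_zero W v)) as [Hz|Hnz].
  - apply bf_zero; auto. split; auto. intros i j ai aj bi bj H1 H2 H3 H4.
    rewrite H1 in H3. rewrite H2 in H4. inversion H3. inversion H4. subst. tauto.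
  - destruct (classic (exists u, wo_succ_of W v u)) as [[u Hu]|Hns].
    + apply (bf_succ dX W v u); auto.
      * intros x. exists x. apply IH. apply Hu.
      * intros x. exists x. apply IH. apply Hu.
    + apply bf_lim. * split; auto. intros u Hu. apply Hns. eauto.
      * intros u Hu. apply IH; auto.
Qed.

Lemma bf_fin_sim {X : Type} (dX : X -> X -> R) (Hm : is_metric dX) (W : WellOrder) v n :
  fin W v n -> forall a b, bf dX W v a b -> sim dX n a b.
Proof.
  induction 1 as [v Hz|v u n [Huv Hmax] Hfin IH]; intros a b Hbf.
  - inversion Hbf; subst.
    + simpl. apply pi_de; auto.
    + exfalso. destruct H as [H _]. eapply Hz; eauto.
    + exfalso. destruct H as [H _]. auto.
  - inversion Hbf; subst.
    + exfalso. eapply H; eauto.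
    + assert (v0 = u).
      { destruct H as [Hv0 Hm0]. destruct (Hm0 u Huv) as [E|E]; auto.
        destruct (Hmax v0 Hv0) as [E'|E']; auto.
        exfalso. eapply wo_irrefl. eapply wo_trans; eauto. }
      subst v0. split.
      * intros x. destruct (H0 x) as [y Hy]. eauto.
      * intros y. destruct (H1 y) as [x Hx]. eauto.
    + exfalso. destruct H as [_ H]. apply (H u). split; auto.
Qed.

Theorem theorem6p3
  (d : nat -> nat -> R) (Hd : is_metric d)
  (X : Type) (dX : X -> X -> R) (iota : nat -> X)
  (Hcompl : is_completion d dX iota)
  (Hproper : proper_metric dX) :
  forall (W : WellOrder) (w w' : W),
    is_omega1CK (code_metric d) W w ->
    wo_succ_of W w' w ->
    SR_struct_le dX W w'.
Proof.
  intros W w w' Hom Hsucc a.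
  destruct Hcompl as [Hm _].
  exists w. split; [exact (proj1 Hsucc)|].
  intros b Hlen [W'' [v'' Hnot]].
  destruct (classic (a = nil)) as [Ea|Hne].
  - subst a. destruct b; [|simpl in Hlen; discriminate].
    exfalso. apply Hnot. apply bf_refl.
  - destruct (classic (forall n, sim dX n a b)) as [Hall|Hn].
    + exfalso. apply Hnot. apply (bf_all dX Hm (iota 0%nat) Hproper); auto.
    + apply not_all_ex_not in Hn as [n Hn].
      destruct (chain _ W w Hom n) as [v [Hv Hfin]].
      exists v. split; [right; auto|]. intro Hb. apply Hn.
      eapply bf_fin_sim; eauto.
Qed.
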